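(* Let $V$ be a finite set. Let $\mathcal{Q}:=\{\hat X\in\mathbb{S}^{\{0\}\cup V}_+ : \hat X_{00}=1,\ \hat X_{ii}=\hat X_{0i}\ \forall i\in V\}$, $\mathcal{Q}':=\{\hat X\in\mathcal{Q} : \hat X[V]\ge 0 \text{ entrywise}\}$, and $\mathcal{Q}'':=\{\hat X\in\mathcal{Q} : (e_0-e_i)^{\mathsf T}\hat X(e_0-e_j)\ge 0\ \forall ij\in\binom{V}{2}\}$. Let $\hat{\mathcal{C}}\in\{\mathcal{Q},\mathcal{Q}',\mathcal{Q}''\}$. Then a point $\hat X$ of $\hat{\mathcal{C}}$ is a vertex of $\hat{\mathcal{C}}$ if and only if $\operatorname{rank}(\hat X)=1$. Thus the vertices of $\hat{\mathcal{C}}$ are precisely the matrices $(1\oplus\chi^S)(1\oplus\chi^S)^{\mathsf T}$ with $S\subseteq V$.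
   Context: $0$ is a new index not in $V$; $\mathbb{S}^{W}_+$ denotes real symmetric positive semidefinite matrices indexed by $W$, with trace inner product; $e_i$ are standard basis vectors of $\mathbb{R}^{\{0\}\cup V}$; $\hat X[V]$ is the principal submatrix indexed by $V$. $\chi^S$ is the incidence vector of $S$ and $1\oplus\chi^S\in\mathbb{R}^{\{0\}\cup V}$ has $0$-entry $1$. For a convex set $\mathcal{C}$ in a finite-dimensional space $\mathbb{E}$ and $\bar x\in\mathcal{C}$, the normal cone is $N_{\mathcal{C}}(\bar x):=\{c : \langle c,x\rangle\le\langle c,\bar x\rangle\ \forall x\in\mathcal{C}\}$; $\bar x$ is a vertex if $\dim N_{\mathcal{C}}(\bar x)=\dim\mathbb{E}$. *)

(* Defs.v *)
From HB Require Import structures.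
From mathcomp Require Import all_boot all_order all_algebra.
From mathcomp Require Import reals.
Set Implicit Arguments. Unset Strict Implicit. Unset Printing Implicit Defensive.
Import Order.TTheory GRing.Theory Num.Theory.
Local Open Scope ring_scope.

(* The ground set V is 'I_n; the index set {0} u V is 'I_n.+1, where the
   new index 0 is ord0 and i \in V is identified with (lift ord0 i). *)

Section Defs.
Variable R : realType.
Variable n : nat.

Notation MX := 'M[R]_(n.+1).

Definition vidx (i : 'I_n) : 'I_n.+1 := lift ord0 i.

Definition ebas (k : 'I_n.+1) : 'cV[R]_(n.+1) := delta_mx k 0.

Definition symmetric (A : MX) : Prop := A^T = A.

Definition psd (A : MX) : Prop :=
  symmetric A /\ forall x : 'cV[R]_(n.+1), 0 <= (x^T *m A *m x) 0 0.

Definition trinner (A B : MX) : R := \tr (A^T *m B).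

Definition inQ (X : MX) : Prop :=
  psd X /\ X ord0 ord0 = 1 /\ forall i : 'I_n, X (vidx i) (vidx i) = X ord0 (vidx i).

Definition inQ' (X : MX) : Prop :=
  inQ X /\ forall i j : 'I_n, 0 <= X (vidx i) (vidx j).

Definition inQ'' (X : MX) : Prop :=
  inQ X /\ forall i j : 'I_n, i != j ->
    0 <= ((ebas ord0 - ebas (vidx i))^T *m X *m (ebas ord0 - ebas (vidx j))) 0 0.

Inductive which := WQ | WQ' | WQ''.

Definition Chat (c : which) : MX -> Prop :=
  match c with WQ => inQ | WQ' => inQ' | WQ'' => inQ'' end.

Definition normal_cone (K : MX -> Prop) (Xb : MX) (C : MX) : Prop :=
  symmetric C /\ forall X, K X -> trinner C X <= trinner C Xb.

(* dim N = dim E, for N a subset of E: the affine hull of N is all of E,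
   i.e. every element of E is an affine combination of finitely many
   elements of N. *)
Definition full_dim (N : MX -> Prop) : Prop :=
  forall M : MX, symmetric M ->
    exists (k : nat) (Cs : 'I_k -> MX) (w : 'I_k -> R),
      (forall i, N (Cs i)) /\ \sum_(i < k) w i = 1 /\
      M = \sum_(i < k) w i *: Cs i.

Definition is_vertex (K : MX -> Prop) (Xb : MX) : Prop :=
  K Xb /\ full_dim (normal_cone K Xb).

Definition lifted_incidence (S : {set 'I_n}) : 'cV[R]_(n.+1) :=
  \col_(k < n.+1) (if unlift ord0 k is Some i then (i \in S)%:R else 1).

End Defs.

(* Main.v *)
Require Import Defs.
From HB Require Import structures.
From mathcomp Require Import all_boot all_order all_algebra.
From mathcomp Require Import reals.
From mathcomp Require Import ring lra.
Import Order.TTheory GRing.Theory Num.Theory.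
Local Open Scope ring_scope.
Set Implicit Arguments. Unset Strict Implicit. Unset Printing Implicit Defensive.

Section Aux.
Variable R : realType.

Lemma lin_quad (a b e : R) : 0 < e ->
  (forall t : R, `|t| < e -> t * a + t ^+ 2 * b <= 0) -> a = 0.
Proof.
move=> e0 H; apply/eqP; apply/negPn/negP => a0.
have ha : 0 < `|a| by rewrite normr_gt0.
have hb : 0 <= `|b| by [].
set den := 2 * (`|a| + 1) * (`|b| + 1) * (e + 1).
have h1 : 0 < `|a| + 1 by lra.
have h2 : 0 < `|b| + 1 by lra.
have h3 : 0 < e + 1 by lra.
have hden : 0 < den by rewrite /den !mulr_gt0.
set tau := e / den.
have htd : tau * den = e by rewrite /tau mulfVK // gt_eqF.
have htau : 0 < tau by rewrite /tau divr_gt0.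
have hbb : - `|b| <= b by have := ler_norm (- b); rewrite normrN; lra.
have hbb' : b <= `|b| by apply: ler_norm.
have Ht : `|a * tau| < e.
  rewrite normrM (gtr0_norm htau).
  rewrite -htd mulrC ltr_pM2l // /den.
  have : 1 <= (`|b| + 1) * (e + 1) by nra.
  nra.
have := H _ Ht.
have hsq : 0 < a ^+ 2 by rewrite lt_def sqr_ge0 expf_neq0.
have htb : tau * `|b| < 1.
  have k : `|b| * e < (`|b| + 1) * (e + 1) by nra.
  have k2 : 0 < (`|b| + 1) * (e + 1) by nra.
  have hh : `|b| * e < den.
    have -> : den = (2 * (`|a| + 1)) * ((`|b| + 1) * (e + 1)) by rewrite /den !mulrA.
    nra.
  have : tau * `|b| * e < e by rewrite -[X in _ < X]htd -mulrA ltr_pM2l.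
  rewrite -[X in _ < X]mul1r; rewrite ltr_pM2r //.
have h4 : 0 <= tau * b + tau * `|b| by rewrite -mulrDr; apply: mulr_ge0; lra.
have h5 : 0 < 1 + tau * b by lra.
have h6 : 0 < tau * a ^+ 2 * (1 + tau * b) by apply: mulr_gt0 => //; apply: mulr_gt0.
have -> : a * tau * a + (a * tau) ^+ 2 * b = tau * a ^+ 2 * (1 + tau * b) by ring.
lra.
Qed.
End Aux.

Section Mat.
Variable R : realType.
Variable n : nat.
Notation MX := 'M[R]_(n.+1).
Notation CV := 'cV[R]_(n.+1).

Definition qf (u w : CV) (X : MX) : R := (u^T *m X *m w) 0 0.

Lemma sym_entry (X : MX) a b : Defs.symmetric X -> X a b = X b a.
Proof. by move=> /matrixP h; rewrite -(h b a) mxE. Qed.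

Lemma qf_ebas (X : MX) a b : qf (ebas R a) (ebas R b) X = X a b.
Proof. by rewrite /qf /ebas trmx_delta -rowE -colE !mxE. Qed.

Lemma qfDl (u1 u2 w : CV) X : qf (u1 + u2) w X = qf u1 w X + qf u2 w X.
Proof. by rewrite /qf raddfD !mulmxDl mxE. Qed.
Lemma qfDr (u w1 w2 : CV) X : qf u (w1 + w2) X = qf u w1 X + qf u w2 X.
Proof. by rewrite /qf !mulmxDr mxE. Qed.
Lemma qfZl (c : R) (u w : CV) X : qf (c *: u) w X = c * qf u w X.
Proof. by rewrite /qf linearZ -!scalemxAl mxE. Qed.
Lemma qfZr (c : R) (u w : CV) X : qf u (c *: w) X = c * qf u w X.
Proof. by rewrite /qf -!scalemxAr mxE. Qed.
Lemma qfNl (u w : CV) X : qf (- u) w X = - qf u w X.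
Proof. by rewrite -scaleN1r qfZl mulN1r. Qed.
Lemma qfNr (u w : CV) X : qf u (- w) X = - qf u w X.
Proof. by rewrite -scaleN1r qfZr mulN1r. Qed.
Lemma qfBl (u1 u2 w : CV) X : qf (u1 - u2) w X = qf u1 w X - qf u2 w X.
Proof. by rewrite qfDl qfNl. Qed.
Lemma qfBr (u w1 w2 : CV) X : qf u (w1 - w2) X = qf u w1 X - qf u w2 X.
Proof. by rewrite qfDr qfNr. Qed.

Lemma qf_sym (u w : CV) X : Defs.symmetric X -> qf u w X = qf w u X.
Proof.
move=> hs; rewrite /qf -[in LHS](trmxK (u^T *m X *m w)) mxE.
by rewrite !trmx_mul trmxK hs mulmxA.
Qed.

Lemma psd_ker (X : MX) (u : CV) : psd X -> qf u u X = 0 -> forall w, qf w u X = 0.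
Proof.
move=> [hs hp] h0 w.
suff: - (2 * qf w u X) = 0 by lra.
apply: (@lin_quad _ _ (- qf w w X) 1) => // t _.
have := hp (u + t *: w).
rewrite -/(qf _ _ X) !qfDl !qfDr !qfZl !qfZr h0 (qf_sym u w hs).
move=> h; nra.
Qed.

Lemma Q3_expr (X : MX) a b :
  ((ebas R 0 - ebas R a)^T *m X *m (ebas R 0 - ebas R b)) 0 0
  = X 0 0 - X 0 b - X a 0 + X a b.
Proof.
rewrite -/(qf _ _ X) qfBl !qfBr !qf_ebas; ring.
Qed.


Lemma Q_sym (X : MX) : inQ X -> Defs.symmetric X.
Proof. by case=> [[]]. Qed.

Lemma Q_0i (X : MX) i : inQ X -> X 0 (vidx i) = X (vidx i) (vidx i).
Proof. by case=> _ [] _ ->. Qed.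

Lemma Q_i0 (X : MX) i : inQ X -> X (vidx i) 0 = X (vidx i) (vidx i).
Proof. by move=> hQ; rewrite sym_entry ?Q_0i //; apply: Q_sym. Qed.

Lemma Q_00 (X : MX) : inQ X -> X 0 0 = 1.
Proof. by case=> _ []. Qed.

Lemma Q_zero_col (X : MX) i : inQ X -> X (vidx i) (vidx i) = 0 ->
  forall b, X b (vidx i) = 0.
Proof.
move=> hQ h0 b; rewrite -qf_ebas; apply: psd_ker; first by case: hQ.
by rewrite qf_ebas.
Qed.

Lemma Q_zero_row (X : MX) i : inQ X -> X (vidx i) (vidx i) = 0 ->
  forall b, X (vidx i) b = 0.
Proof.
by move=> hQ h0 b; rewrite sym_entry ?(Q_zero_col hQ h0) //; apply: Q_sym.
Qed.

Lemma Q_one_col (X : MX) i : inQ X -> X (vidx i) (vidx i) = 1 ->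
  forall b, X b (vidx i) = X b 0.
Proof.
move=> hQ h1 b.
have : qf (ebas R b) (ebas R 0 - ebas R (vidx i)) X = 0.
  apply: psd_ker; first by case: hQ.
  rewrite qfBl !qfBr !qf_ebas Q_00 // Q_0i // Q_i0 // h1; ring.
rewrite qfBr !qf_ebas; lra.
Qed.

Lemma Q_one_row (X : MX) i : inQ X -> X (vidx i) (vidx i) = 1 ->
  forall b, X (vidx i) b = X 0 b.
Proof.
move=> hQ h1 b; have hs := Q_sym hQ.
by rewrite sym_entry // (Q_one_col hQ h1) sym_entry.
Qed.

Lemma li_0 (S : {set 'I_n}) : lifted_incidence R S 0 0 = 1.
Proof. by rewrite mxE unlift_none. Qed.

Lemma li_v (S : {set 'I_n}) i : lifted_incidence R S (vidx i) 0 = (i \in S)%:R.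
Proof. by rewrite mxE /vidx liftK. Qed.

Lemma outer_entry (v w : CV) a b : (v *m w^T) a b = v a 0 * w b 0.
Proof. by rewrite mxE big_ord1 mxE. Qed.

Definition vvT (S : {set 'I_n}) : MX :=
  lifted_incidence R S *m (lifted_incidence R S)^T.

Lemma noFrac (X : MX) : inQ X ->
  (forall i, X (vidx i) (vidx i) = 0 \/ X (vidx i) (vidx i) = 1) ->
  X = vvT [set i | X (vidx i) (vidx i) == 1].
Proof.
move=> hQ hd; set S := [set i | _].
have hv : forall i, (i \in S)%:R = X (vidx i) (vidx i) :> R.
  move=> i; rewrite inE; case: (hd i) => ->; last by rewrite eqxx.
  by rewrite eq_sym oner_eq0.
have row0 : forall b, X 0 b = lifted_incidence R S b 0.
  move=> b; case: (unliftP ord0 b) => [j ->|->].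
    by rewrite -/(vidx j) li_v hv Q_0i.
  by rewrite li_0 Q_00.
apply/matrixP => a b; rewrite /vvT outer_entry.
case: (unliftP ord0 a) => [i ->|->]; last by rewrite li_0 mul1r row0.
rewrite -/(vidx i) li_v hv.
case: (hd i) => h; rewrite h.
  by rewrite mul0r (Q_zero_row hQ h).
by rewrite mul1r (Q_one_row hQ h) row0.
Qed.


Lemma rank1_noFrac (X : MX) : inQ X -> \rank X = 1%N ->
  forall i, X (vidx i) (vidx i) = 0 \/ X (vidx i) (vidx i) = 1.
Proof.
move=> hQ hr i.
have := mulmx_base X.
move: (col_base X) (row_base X); rewrite hr => c r hX.
have e : forall a b, X a b = c a 0 * r 0 b.
  by move=> a b; rewrite -hX mxE big_ord1.
have : X (vidx i) (vidx i) * X 0 0 = X (vidx i) 0 * X 0 (vidx i).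
  rewrite !e; ring.
rewrite Q_00 // Q_0i // Q_i0 // => h.
have : X (vidx i) (vidx i) * (1 - X (vidx i) (vidx i)) = 0 by nra.
move/eqP; rewrite mulf_eq0 => /orP [/eqP -> | ]; first by left.
by rewrite subr_eq0 => /eqP <-; right.
Qed.

Lemma vvT_rank (S : {set 'I_n}) : \rank (vvT S) = 1%N.
Proof.
apply/eqP; rewrite eqn_leq; apply/andP; split.
  by apply: leq_trans (mxrankM_maxl _ _) (rank_leq_col _).
rewrite lt0n mxrank_eq0; apply/eqP => /matrixP /(_ 0 0).
by rewrite /vvT outer_entry li_0 mxE mul1r; apply/eqP; rewrite oner_eq0.
Qed.

Lemma vvT_entry (S : {set 'I_n}) a b :
  vvT S a b = lifted_incidence R S a 0 * lifted_incidence R S b 0.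
Proof. exact: outer_entry. Qed.

Lemma li_bool (S : {set 'I_n}) a :
  lifted_incidence R S a 0 = 0 \/ lifted_incidence R S a 0 = 1.
Proof.
case: (unliftP ord0 a) => [i ->|->]; last by rewrite li_0; right.
by rewrite -/(vidx i) li_v; case: (i \in S); [right | left].
Qed.

Lemma vvT_Q (S : {set 'I_n}) : inQ (vvT S).
Proof.
split; [split | split].
- by rewrite /Defs.symmetric /vvT trmx_mul trmxK.
- move=> x; rewrite /vvT mulmxA -mulmxA.
  rewrite mxE big_ord1.
  have -> : (lifted_incidence R S)^T *m x = (x^T *m lifted_incidence R S)^T.
    by rewrite trmx_mul trmxK.
  rewrite mxE.
  have tr1 : forall y : 'M[R]_1, y^T 0 0 = y 0 0 by move=> y; rewrite mxE.
  rewrite tr1 mxE -expr2; exact: sqr_ge0.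
- by rewrite vvT_entry li_0 mulr1.
- move=> i; rewrite !vvT_entry li_0 mul1r.
  by case: (li_bool S (vidx i)) => ->; rewrite ?mulr0 ?mulr1.
Qed.

Lemma vvT_Chat c (S : {set 'I_n}) : Chat c (vvT S).
Proof.
have hQ := vvT_Q S.
case: c => //=.
- split=> // i j; rewrite vvT_entry.
  by case: (li_bool S (vidx i)) => ->; case: (li_bool S (vidx j)) => ->;
     rewrite ?mulr0 ?mulr1.
- split=> // i j _; rewrite Q3_expr !vvT_entry li_0.
  by case: (li_bool S (vidx i)) => ->; case: (li_bool S (vidx j)) => ->;
     rewrite ?mulr0 ?mulr1 ?mul0r ?mul1r; lra.
Qed.

Lemma Chat_Q c (X : MX) : Chat c X -> inQ X.
Proof. by case: c => //= -[]. Qed.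


Lemma trinner_outer (u w : CV) (X : MX) : trinner (u *m w^T) X = qf u w X.
Proof.
rewrite /trinner trmx_mul trmxK -mulmxA mxtrace_mulC /qf.
by rewrite /mxtrace big_ord1.
Qed.

Lemma trinnerD (C1 C2 X : MX) : trinner (C1 + C2) X = trinner C1 X + trinner C2 X.
Proof. by rewrite /trinner raddfD mulmxDl mxtraceD. Qed.

Lemma trinnerZ (k : R) (C X : MX) : trinner (k *: C) X = k * trinner C X.
Proof. by rewrite /trinner linearZ -scalemxAl mxtraceZ. Qed.

Lemma trinnerN (C X : MX) : trinner (- C) X = - trinner C X.
Proof. by rewrite -scaleN1r trinnerZ mulN1r. Qed.

Lemma trinner_sum (k : nat) (w : 'I_k -> R) (Cs : 'I_k -> MX) (X : MX) :
  trinner (\sum_(i < k) w i *: Cs i) X = \sum_(i < k) w i * trinner (Cs i) X.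
Proof.
elim/big_rec2: _ => [|i y1 y2 _ <-]; last by rewrite trinnerD trinnerZ.
by rewrite /trinner linear0 mul0mx mxtrace0.
Qed.

Definition spanN (N : MX -> Prop) (M : MX) : Prop :=
  exists k (Cs : 'I_k -> MX) (w : 'I_k -> R),
    (forall i, N (Cs i)) /\ M = \sum_(i < k) w i *: Cs i.

Lemma spanN_0 N : spanN N 0.
Proof. by exists 0%N, (fun _ => 0), (fun _ => 0); split=> [[]//|]; rewrite big_ord0. Qed.

Lemma spanN_N (N : MX -> Prop) C : N C -> spanN N C.
Proof.
by move=> h; exists 1%N, (fun _ => C), (fun _ => 1); split=> //; rewrite big_ord1 scale1r.
Qed.

Lemma spanN_add N M1 M2 : spanN N M1 -> spanN N M2 -> spanN N (M1 + M2).
Proof.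
move=> [k1 [C1 [w1 [h1 ->]]]] [k2 [C2 [w2 [h2 ->]]]].
exists (k1 + k2)%N, (fun i => match split i with inl a => C1 a | inr b => C2 b end),
  (fun i => match split i with inl a => w1 a | inr b => w2 b end); split.
  by move=> i; case: (split i).
rewrite big_split_ord /=; congr (_ + _); apply: eq_bigr => i _.
  by have := unsplitK (inl i : 'I_k1 + 'I_k2) => /= ->.
by have := unsplitK (inr i : 'I_k1 + 'I_k2) => /= ->.
Qed.

Lemma spanN_scale N (c : R) M : spanN N M -> spanN N (c *: M).
Proof.
move=> [k [C [w [h ->]]]]; exists k, C, (fun i => c * w i); split=> //.
rewrite scaler_sumr; apply: eq_bigr => i _; by rewrite scalerA.
Qed.

Lemma spanN_sum N (k : nat) (F : 'I_k -> MX) :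
  (forall i, spanN N (F i)) -> spanN N (\sum_(i < k) F i).
Proof.
move=> h; elim/big_rec: _ => [|i x _ hx]; first exact: spanN_0.
exact: spanN_add.
Qed.

Lemma full_dim_span (N : MX -> Prop) : N 0 ->
  (forall M : MX, Defs.symmetric M -> spanN N M) -> full_dim N.
Proof.
move=> h0 hs M hM; have [k [C [w [hC ->]]]] := hs M hM.
exists k.+1, (fun i => match unlift ord0 i with Some j => C j | None => 0 end),
  (fun i => match unlift ord0 i with Some j => w j | None => 1 - \sum_(j < k) w j end).
split; first by move=> i; case: (unlift ord0 i).
rewrite !big_ord_recl !unlift_none; split.
  by rewrite [X in _ + X](eq_bigr w) ?subrK // => i _; rewrite liftK.
by rewrite scaler0 add0r; apply: eq_bigr => i _; rewrite liftK.
Qed.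

Lemma span_sym (N : MX -> Prop) :
  (forall a b, spanN N (delta_mx a b + delta_mx b a)) ->
  forall M : MX, Defs.symmetric M -> spanN N M.
Proof.
move=> h M hM.
have -> : M = (2^-1 : R) *: (M + M^T).
  by rewrite hM -mulr2n -scaler_nat scalerA mulVf ?scale1r // pnatr_eq0.
apply: spanN_scale.
rewrite [X in X + _]matrix_sum_delta [X in _ + X^T]matrix_sum_delta.
rewrite raddf_sum /= -big_split /=; apply: spanN_sum => a.
rewrite raddf_sum /= -big_split /=; apply: spanN_sum => b.
rewrite linearZ /= trmx_delta -scalerDr; apply: spanN_scale; exact: h.
Qed.


Definition Eo (a b : 'I_n.+1) : MX := ebas R a *m (ebas R b)^T.

Lemma delta_Eo a b : delta_mx a b = Eo a b :> MX.
Proof. by rewrite /Eo /ebas trmx_delta mul_delta_mx. Qed.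

Lemma outer_sym (u : CV) : Defs.symmetric (u *m u^T).
Proof. by rewrite /Defs.symmetric trmx_mul trmxK. Qed.

Lemma qf_vvT (S : {set 'I_n}) (u w : CV) :
  qf u w (vvT S) = (u^T *m lifted_incidence R S) 0 0 * (w^T *m lifted_incidence R S) 0 0.
Proof.
rewrite /qf /vvT.
have -> : u^T *m (lifted_incidence R S *m (lifted_incidence R S)^T) *m w
   = (u^T *m lifted_incidence R S) *m ((lifted_incidence R S)^T *m w).
  by rewrite !mulmxA.
rewrite [in LHS]mxE big_ord1; congr (_ * _).
have tr1 : forall A : 'M[R]_1, A 0 0 = A^T 0 0 by move=> A; rewrite mxE.
by rewrite tr1 trmx_mul trmxK.
Qed.

Lemma ebas_v (S : {set 'I_n}) a :
  ((ebas R a)^T *m lifted_incidence R S) 0 0 = lifted_incidence R S a 0.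
Proof. by rewrite /ebas trmx_delta -rowE mxE. Qed.

Lemma vertex_vvT c (S : {set 'I_n}) : is_vertex (Chat c) (vvT S).
Proof.
split; first exact: vvT_Chat.
set v := lifted_incidence R S.
set N := normal_cone (Chat c) (vvT S).
have N0 : N 0.
  split; first by rewrite /Defs.symmetric trmx0.
  by move=> X _; rewrite /trinner trmx0 !mul0mx.
have Ninv : forall C k, Defs.symmetric C -> (forall X, inQ X -> trinner C X = k) -> N C.
  move=> C k hs hk; split=> // X hX.
  by rewrite (hk X (Chat_Q hX)) (hk _ (vvT_Q S)).
have Nneg : forall u : CV, (u^T *m v) 0 0 = 0 -> N (- (u *m u^T)).
  move=> u hu; split.
    by rewrite /Defs.symmetric linearN /= outer_sym.
  move=> X hX; rewrite !trinnerN !trinner_outer qf_vvT hu mul0r oppr0 oppr_le0.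
  by case: (Chat_Q hX) => -[_ hp] _; apply: hp.
have spN : forall C, N C -> spanN N C by move=> C; apply: spanN_N.
have spuu : forall u : CV, (u^T *m v) 0 0 = 0 -> spanN N (u *m u^T).
  move=> u hu; rewrite -[u *m u^T]opprK -scaleN1r; apply: spanN_scale.
  exact/spN/Nneg.
have orthD : forall u w : CV, ((u + w)^T *m v) 0 0 = (u^T *m v) 0 0 + (w^T *m v) 0 0.
  by move=> u w; rewrite raddfD mulmxDl mxE.
have orthZ : forall (k : R) (u : CV), ((k *: u)^T *m v) 0 0 = k * (u^T *m v) 0 0.
  by move=> k u; rewrite linearZ -scalemxAl mxE.
have sppol : forall u w : CV, (u^T *m v) 0 0 = 0 -> (w^T *m v) 0 0 = 0 ->
    spanN N (u *m w^T + w *m u^T).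
  move=> u w hu hw.
  have -> : u *m w^T + w *m u^T =
     (2^-1 : R) *: ((u + w) *m (u + w)^T + (-1) *: ((u - w) *m (u - w)^T)).
    apply/matrixP => a b; rewrite !(outer_entry, mxE); by field.
  apply: spanN_scale; apply: spanN_add; last apply: spanN_scale.
    by apply: spuu; rewrite orthD hu hw addr0.
  by apply: spuu; rewrite orthD -scaleN1r orthZ hu hw; ring.
pose e (a : 'I_n.+1) : CV := ebas R a.
have E00 : N (Eo 0 0).
  apply: (Ninv _ 1); first exact: outer_sym.
  by move=> X hX; rewrite trinner_outer qf_ebas Q_00.
pose F i := Eo (vidx i) (vidx i) - (2^-1 : R) *: (Eo 0 (vidx i) + Eo (vidx i) 0).
have FN : forall i, N (F i).
  move=> i; apply: (Ninv _ 0).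
    by apply/matrixP => a b; rewrite /F /Eo !(outer_entry, mxE); ring.
  move=> X hX; rewrite /F trinnerD trinnerN trinnerZ trinnerD !trinner_outer.
  rewrite !qf_ebas Q_0i // Q_i0 //; by field.
pose u i := e (vidx i) - v (vidx i) 0 *: e 0.
have uo : forall i, ((u i)^T *m v) 0 0 = 0.
  move=> i; rewrite /u orthD -scaleN1r orthZ orthZ /e !ebas_v li_0; ring.
have vb : forall i, v (vidx i) 0 = 0 \/ v (vidx i) 0 = 1 by move=> i; apply: li_bool.
have spE00 : spanN N (Eo 0 0) by apply: spN.
have spG : forall i, spanN N (Eo 0 (vidx i) + Eo (vidx i) 0).
  move=> i; case: (vb i) => hv.
  - have -> : Eo 0 (vidx i) + Eo (vidx i) 0 = 2 *: (u i *m (u i)^T) + (-2) *: F i.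
      apply/matrixP => a b; rewrite /F /u /Eo hv !(outer_entry, mxE); by field.
    by apply: spanN_add; apply: spanN_scale; [apply: spuu | apply: spN].
  - have -> : Eo 0 (vidx i) + Eo (vidx i) 0 =
        2 *: F i + 2 *: Eo 0 0 + (-2) *: (u i *m (u i)^T).
      apply/matrixP => a b; rewrite /F /u /Eo hv !(outer_entry, mxE); by field.
    apply: spanN_add; last by apply: spanN_scale; apply: spuu.
    by apply: spanN_add; apply: spanN_scale; apply: spN.
apply: full_dim_span => //; apply: span_sym => a b; rewrite !delta_Eo.
case: (unliftP ord0 a) => [i ->|->]; case: (unliftP ord0 b) => [j ->|->].
- have -> : Eo (lift ord0 i) (lift ord0 j) + Eo (lift ord0 j) (lift ord0 i) =
     (u i *m (u j)^T + u j *m (u i)^T) + v (vidx j) 0 *: (Eo 0 (vidx i) + Eo (vidx i) 0)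
     + v (vidx i) 0 *: (Eo 0 (vidx j) + Eo (vidx j) 0)
     + (- (2 * v (vidx i) 0 * v (vidx j) 0)) *: Eo 0 0.
    apply/matrixP => a0 b0; rewrite /u /Eo !(outer_entry, mxE); ring.
  apply: spanN_add; last by apply: spanN_scale.
  apply: spanN_add; last by apply: spanN_scale.
  apply: spanN_add; last by apply: spanN_scale.
  exact: sppol.
- by rewrite addrC; apply: spG.
- exact: spG.
- by rewrite -mulr2n -scaler_nat; apply: spanN_scale.
Qed.


Lemma trinnerDr (C X1 X2 : MX) : trinner C (X1 + X2) = trinner C X1 + trinner C X2.
Proof. by rewrite /trinner mulmxDr mxtraceD. Qed.

Lemma trinnerZr (k : R) (C X : MX) : trinner C (k *: X) = k * trinner C X.
Proof. by rewrite /trinner -scalemxAr mxtraceZ. Qed.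

Lemma trinner_self (D : MX) : trinner D D = \sum_i \sum_j D j i ^+ 2.
Proof.
rewrite /trinner /mxtrace; apply: eq_bigr => i _; rewrite mxE.
by apply: eq_bigr => j _; rewrite mxE expr2.
Qed.

Lemma trinner_self_pos (D : MX) : D != 0 -> 0 < trinner D D.
Proof.
case/matrix0Pn => a [b hab].
have hge : forall i, 0 <= \sum_j D j i ^+ 2.
  by move=> i; apply: sumr_ge0 => j _; apply: sqr_ge0.
rewrite lt_def trinner_self sumr_ge0 ?andbT //; apply/eqP => h0.
have := psumr_eq0P (fun i _ => hge i) h0 (i := b) isT.
move/psumr_eq0P => /(_ (fun j _ => sqr_ge0 _) a isT) /eqP.
by rewrite sqrf_eq0 (negbTE hab).
Qed.

Lemma notvertex_curve (K : MX -> Prop) (X D E : MX) (q e : R) :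
  0 < e -> 0 <= q -> Defs.symmetric D -> D != 0 ->
  (forall s : R, `|s| < e -> K ((1 + s ^+ 2 * q)^-1 *: (X + s *: D + s ^+ 2 *: E))) ->
  ~ is_vertex K X.
Proof.
move=> he hq hsD hD hc [hK hfull].
have [k [Cs [w [hN [_ hDs]]]]] := hfull D hsD.
have h0 : forall i, trinner (Cs i) D = 0.
  move=> i; have [_ hCi] := hN i.
  apply: (@lin_quad _ _ (trinner (Cs i) E - q * trinner (Cs i) X) e) => // s hs.
  have := hCi _ (hc s hs).
  have hp : 0 < 1 + s ^+ 2 * q.
    have : 0 <= s ^+ 2 * q by rewrite mulr_ge0 // sqr_ge0.
    lra.
  rewrite trinnerZr !trinnerDr !trinnerZr.
  rewrite mulrC -ler_pdivlMr ?invr_gt0 // invrK => h.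
  nra.
have : trinner D D = 0.
  by rewrite [X in trinner X D]hDs trinner_sum big1 // => i _; rewrite h0 mulr0.
by move/eqP; rewrite gt_eqF // trinner_self_pos.
Qed.


Lemma colrow_entry p (u : CV) (r : 'rV[R]_p) a b : (u *m r) a b = u a 0 * r 0 b.
Proof. by rewrite mxE big_ord1. Qed.

Lemma ebas_entry (b a : 'I_n.+1) : ebas R b a 0 = (a == b)%:R.
Proof. by rewrite /ebas mxE eqxx andbT eq_sym. Qed.

Lemma mul_ebas (M : MX) a b : (M *m ebas R b) a 0 = M a b.
Proof. by rewrite /ebas -colE mxE. Qed.

Lemma vidx_neq0 (i : 'I_n) : vidx i != 0.
Proof. by apply/eqP => /(congr1 val). Qed.

Section Curve.
Variable Z : MX.
Variable k : 'I_n.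
Hypothesis hQ : inQ Z.
Hypothesis hk0 : 0 < Z (vidx k) (vidx k).
Hypothesis hk1 : Z (vidx k) (vidx k) < 1.

Let dk := Z (vidx k) (vidx k).
Let beta : CV := ebas R (vidx k) - dk *: ebas R 0.
Let zb : CV := Z *m beta.
Let gam (a : 'I_n.+1) : R :=
  if a == 0 then 0 else if Z a a == 0 then 0 else zb a 0 / Z a a.
Let gv : 'rV[R]_(n.+1) := \row_a gam a.
Let Bm : MX := diag_mx gv + ebas R 0 *m beta^T.
Let Am (s : R) : MX := 1%:M + s *: Bm.
Let Dm : MX := Bm *m Z + Z *m Bm^T.
Let Em : MX := Bm *m Z *m Bm^T.
Let qv : R := qf beta beta Z.

Let hsym : Defs.symmetric Z. Proof. exact: Q_sym. Qed.

Lemma zb_entry a : zb a 0 = Z a (vidx k) - dk * Z a 0.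
Proof.
have -> : zb a 0 = qf (ebas R a) beta Z.
  by rewrite /qf /zb /ebas trmx_delta -mulmxA -rowE [RHS]mxE.
by rewrite /beta qfBr qfZr !qf_ebas.
Qed.

Lemma zb0 : zb 0 0 = 0.
Proof. by rewrite zb_entry Q_00 // mulr1 Q_0i // subrr. Qed.

Lemma zb_zero a : Z a a = 0 -> zb a 0 = 0.
Proof.
move=> h; rewrite zb_entry.
case: (unliftP ord0 a) h => [j -> h|-> h]; last first.
  by have := Q_00 hQ; rewrite h => /eqP; rewrite eq_sym oner_eq0.
by rewrite !(Q_zero_row hQ h) mulr0 subrr.
Qed.

Lemma gam0 : gam 0 = 0.
Proof. by rewrite /gam eqxx. Qed.

Lemma gam_mul a : a != 0 -> gam a * Z a a = zb a 0.
Proof.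
move=> /negbTE ha; rewrite /gam ha.
case: eqP => h; first by rewrite h mulr0 zb_zero.
by rewrite mulfVK //; apply/eqP.
Qed.

Lemma B_entry p (M : 'M[R]_(n.+1, p)) a b :
  (Bm *m M) a b = gam a * M a b + (a == 0)%:R * (beta^T *m M) 0 b.
Proof.
rewrite /Bm mulmxDl mxE mul_diag_mx mxE -mulmxA colrow_entry ebas_entry.
by rewrite /gv mxE.
Qed.

Lemma A_entry p (s : R) (M : 'M[R]_(n.+1, p)) a b :
  (Am s *m M) a b = M a b + s * (Bm *m M) a b.
Proof. by rewrite /Am mulmxDl mul1mx -scalemxAl mxE [X in _ + X]mxE. Qed.

Let Y (s : R) : MX := Am s *m Z *m (Am s)^T.
Let c (s : R) (a : 'I_n.+1) : R := 1 + s * gam a.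

Lemma Y_alt s : Y s = Am s *m (Am s *m Z)^T.
Proof. by rewrite /Y trmx_mul hsym mulmxA. Qed.

Lemma trE p r (A : 'M[R]_(p, r)) i j : A i j = A^T j i.
Proof. by rewrite mxE. Qed.

Lemma betaZ0 : (beta^T *m Z) 0 0 = 0.
Proof. by rewrite trE trmx_mul trmxK hsym -/zb zb0. Qed.

Lemma W_entry s a b : a != 0 -> (Am s *m Z) a b = c s a * Z a b.
Proof.
move=> /negbTE ha; rewrite A_entry B_entry ha mul0r addr0 /c; ring.
Qed.

Lemma W00 s : (Am s *m Z) 0 0 = 1.
Proof. by rewrite A_entry B_entry gam0 betaZ0 Q_00 // mul0r mulr0 add0r mulr0 addr0. Qed.

Lemma Wbeta s b : b != 0 -> ((Am s *m Z) *m beta) b 0 = c s b * zb b 0.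
Proof.
move=> /negbTE hb; rewrite -mulmxA -/zb A_entry B_entry hb mul0r addr0 /c; ring.
Qed.

Lemma Wbeta0 s : ((Am s *m Z) *m beta) 0 0 = s * qv.
Proof.
rewrite -mulmxA -/zb A_entry B_entry gam0 zb0 mul0r mul1r add0r add0r.
by rewrite /qv /qf /zb mulmxA.
Qed.

Lemma Y_entry s a b : Y s a b =
  c s a * (Am s *m Z) b a + s * ((a == 0)%:R * ((Am s *m Z) *m beta) b 0).
Proof.
rewrite Y_alt [LHS]A_entry [in LHS]B_entry -!(trE (Am s *m Z) b a) /c.
have -> : (beta^T *m (Am s *m Z)^T) 0 b = ((Am s *m Z) *m beta) b 0.
  by rewrite trE trmx_mul !trmxK.
set w1 := (Am s *m Z) b a; set w2 := (Am s *m Z *m beta) b 0.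
ring.
Qed.

Lemma Y_vv s i j : Y s (vidx i) (vidx j) = c s (vidx i) * c s (vidx j) * Z (vidx i) (vidx j).
Proof.
have hi : vidx i != 0 by exact: vidx_neq0.
have hj : vidx j != 0 by exact: vidx_neq0.
rewrite Y_entry (negbTE hi) mul0r mulr0 addr0 W_entry // (sym_entry _ _ hsym); ring.
Qed.

Lemma Y_00 s : Y s 0 0 = 1 + s ^+ 2 * qv.
Proof. by rewrite Y_entry eqxx mul1r W00 Wbeta0 /c gam0 mulr0 addr0 mulr1 expr2 mulrA. Qed.

Lemma Y_0v s j : Y s 0 (vidx j) = Y s (vidx j) (vidx j).
Proof.
have hj : vidx j != 0 by exact: vidx_neq0.
rewrite Y_entry eqxx mul1r W_entry // Wbeta // Y_vv /c gam0 mulr0 addr0 mul1r.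
rewrite Q_i0 //.
case: (eqVneq (Z (vidx j) (vidx j)) 0) => hz.
  by rewrite zb_zero // hz; ring.
rewrite -gam_mul //; ring.
Qed.

Lemma Y_sym s : Defs.symmetric (Y s).
Proof. by rewrite /Defs.symmetric /Y !trmx_mul trmxK hsym mulmxA. Qed.

Lemma Y_psd s : psd (Y s).
Proof.
split; first exact: Y_sym.
move=> x; rewrite /Y.
have -> : x^T *m (Am s *m Z *m (Am s)^T) *m x = ((Am s)^T *m x)^T *m Z *m ((Am s)^T *m x).
  by rewrite trmx_mul trmxK !mulmxA.
by case: hQ => -[_ hp] _; apply: hp.
Qed.

Lemma Y_poly s : Z + s *: Dm + s ^+ 2 *: Em = Y s.
Proof.
rewrite /Y /Am /Dm /Em.
have -> : (1%:M + s *: Bm)^T = 1%:M + s *: Bm^T by rewrite raddfD /= trmx1 linearZ.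
rewrite mulmxDl mul1mx !mulmxDr mulmx1 mulmxDl.
by rewrite -!scalemxAr -!scalemxAl scalerA scalerDr expr2 !addrA.
Qed.

Lemma Dm_sym : Defs.symmetric Dm.
Proof. by rewrite /Defs.symmetric /Dm raddfD /= !trmx_mul trmxK hsym addrC. Qed.

Lemma Dm_kk : Dm (vidx k) (vidx k) = 2 * (dk * (1 - dk)).
Proof.
have hk : vidx k != 0 by exact: vidx_neq0.
rewrite /Dm mxE.
have -> : (Z *m Bm^T) (vidx k) (vidx k) = (Bm *m Z) (vidx k) (vidx k).
  by rewrite trE trmx_mul trmxK hsym.
rewrite B_entry (negbTE hk) mul0r addr0 gam_mul // zb_entry Q_i0 // -/dk.
ring.
Qed.

Lemma Dm_neq0 : Dm != 0.
Proof.
apply/negP => /eqP h; have := Dm_kk; rewrite h mxE => /eqP.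
rewrite eq_sym mulf_eq0 pnatr_eq0 /= mulf_eq0 subr_eq0 => /orP [] /eqP.
  by move=> h0; have := hk0; rewrite -/dk h0 ltxx.
by move=> h1; have := hk1; rewrite -/dk -h1 ltxx.
Qed.

Lemma qv_ge0 : 0 <= qv.
Proof. by case: hQ => -[_ hp] _; apply: hp. Qed.

Let eps : R := (1 + \sum_a `|gam a|)^-1.

Lemma eps_gt0 : 0 < eps.
Proof.
rewrite /eps invr_gt0; have : 0 <= \sum_a `|gam a| by apply: sumr_ge0.
lra.
Qed.

Lemma c_ge0 s a : `|s| < eps -> 0 <= c s a.
Proof.
move=> hs; rewrite /c.
have hS : `|gam a| <= \sum_a `|gam a|.
  by rewrite (bigD1 a) //= -[X in X <= _]addr0 lerD2l; apply: sumr_ge0.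
have hS0 : 0 <= \sum_a `|gam a| by apply: sumr_ge0.
have h1 : `|s| * (1 + \sum_a `|gam a|) < 1.
  have hp : 0 < 1 + \sum_a `|gam a| by lra.
  by rewrite -ltr_pdivlMr // mul1r.
have h2 : `|s * gam a| < 1.
  rewrite normrM; apply: le_lt_trans h1; apply: ler_wpM2l => //; lra.
have := ler_norm (- (s * gam a)); rewrite normrN; lra.
Qed.

Lemma curve_Q : exists e q (D E : MX), [/\ 0 < e, 0 <= q, Defs.symmetric D, D != 0 &
  forall s, `|s| < e ->
    inQ ((1 + s ^+ 2 * q)^-1 *: (Z + s *: D + s ^+ 2 *: E)) /\
    forall i j, 0 <= Z (vidx i) (vidx j) ->
      0 <= ((1 + s ^+ 2 * q)^-1 *: (Z + s *: D + s ^+ 2 *: E)) (vidx i) (vidx j)].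
Proof.
exists eps, qv, Dm, Em; split => //.
- exact: eps_gt0.
- exact: qv_ge0.
- exact: Dm_sym.
- exact: Dm_neq0.
move=> s hs; rewrite Y_poly.
have hp : 0 < 1 + s ^+ 2 * qv.
  have : 0 <= s ^+ 2 * qv by rewrite mulr_ge0 // ?sqr_ge0 // qv_ge0.
  lra.
have hpi : 0 < (1 + s ^+ 2 * qv)^-1 by rewrite invr_gt0.
split; last first.
  move=> i j hij; rewrite mxE Y_vv; apply: mulr_ge0; first exact: ltW.
  by apply: mulr_ge0 => //; apply: mulr_ge0; apply: c_ge0.
split; [split | split].
- by rewrite /Defs.symmetric linearZ /= Y_sym.
- move=> x; rewrite -scalemxAr -scalemxAl mxE; apply: mulr_ge0; first exact: ltW.
  by case: (Y_psd s) => _; apply.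
- by rewrite mxE Y_00 mulVf // gt_eqF.
- by move=> i; rewrite [LHS]mxE [RHS]mxE Y_0v.
Qed.

End Curve.

Lemma qf_conj (A M : MX) (u w : CV) :
  qf u w (A *m M *m A^T) = qf (A^T *m u) (A^T *m w) M.
Proof. by rewrite /qf trmx_mul trmxK !mulmxA. Qed.

Lemma entry_qf (M : MX) a b : M a b = qf (ebas R a) (ebas R b) M.
Proof. by rewrite qf_ebas. Qed.

Lemma ebasT_v (v : CV) a : ((ebas R a)^T *m v) 0 0 = v a 0.
Proof. by rewrite /ebas trmx_delta -rowE mxE. Qed.

Definition Jm : MX := \matrix_(a, b) ((b == 0)%:R - ((a != 0) && (a == b))%:R).
Definition rv (a : 'I_n.+1) : CV := ebas R 0 - (a != 0)%:R *: ebas R a.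

Lemma entryBZ p r (A B : 'M[R]_(p, r)) (k : R) i j : (A - k *: B) i j = A i j - k * B i j.
Proof. by rewrite !mxE. Qed.

Lemma rv_entry a c : rv a c 0 = (c == 0)%:R - (a != 0)%:R * (c == a)%:R.
Proof. by rewrite /rv entryBZ !ebas_entry. Qed.

Lemma JT_ebas a : Jm^T *m ebas R a = rv a.
Proof.
apply/matrixP => c j; rewrite ord1 mul_ebas rv_entry !mxE.
by case: (a != 0); case: (c == a) / eqP => [->|/eqP]; rewrite ?eqxx //= ?mul1r ?mul0r // eq_sym => /negbTE ->.
Qed.

Lemma J_conj_entry (M : MX) a b : (Jm *m M *m Jm^T) a b = qf (rv a) (rv b) M.
Proof. by rewrite entry_qf qf_conj !JT_ebas. Qed.

Lemma JJ : Jm *m Jm = 1%:M.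
Proof.
apply/matrixP => a b.
have -> : (Jm *m Jm) a b = ((rv a)^T *m (Jm *m ebas R b)) 0 0.
  by rewrite -JT_ebas trmx_mul trmxK -mulmxA ebasT_v mulmxA mul_ebas.
rewrite /rv raddfB /= linearZ /= mulmxBl -scalemxAl entryBZ !ebasT_v !mul_ebas !mxE.
case: (a =P 0) => [->|/eqP ha] /=; first by rewrite mul0r !subr0 eq_sym.
by rewrite mul1r subr0 opprB addrC subrK.
Qed.

Lemma Jinv (M : MX) : Jm *m (Jm *m M *m Jm^T) *m Jm^T = M.
Proof.
by rewrite !mulmxA JJ mul1mx -mulmxA -trmx_mul JJ trmx1 mulmx1.
Qed.

Lemma Jlin (k s t : R) (A B C : MX) :
  Jm *m (k *: (A + s *: B + t *: C)) *m Jm^T =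
  k *: (Jm *m A *m Jm^T + s *: (Jm *m B *m Jm^T) + t *: (Jm *m C *m Jm^T)).
Proof.
by rewrite -scalemxAr -scalemxAl !mulmxDr !mulmxDl -!scalemxAr -!scalemxAl.
Qed.

Lemma rv0 : rv 0 = ebas R 0.
Proof. by rewrite /rv eqxx scale0r subr0. Qed.

Lemma rvv i : rv (vidx i) = ebas R 0 - ebas R (vidx i).
Proof. by rewrite /rv vidx_neq0 scale1r. Qed.

Lemma J_Q3 (X : MX) i j : (Jm *m X *m Jm^T) (vidx i) (vidx j) =
  ((ebas R 0 - ebas R (vidx i))^T *m X *m (ebas R 0 - ebas R (vidx j))) 0 0.
Proof. by rewrite J_conj_entry !rvv. Qed.

Lemma J_Q (X : MX) : inQ X -> inQ (Jm *m X *m Jm^T).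
Proof.
move=> hQ; have hs := Q_sym hQ.
split; [split | split].
- by rewrite /Defs.symmetric !trmx_mul trmxK hs mulmxA.
- move=> x; rewrite -/(qf x x _) qf_conj.
  by case: hQ => -[_ hp] _; apply: hp.
- by rewrite J_conj_entry rv0 qf_ebas Q_00.
- move=> i; rewrite !J_conj_entry rv0 rvv qfBl !qfBr !qf_ebas.
  rewrite Q_00 // Q_0i // Q_i0 //; ring.
Qed.

Lemma frac_notvertex c (X : MX) k : Chat c X ->
  0 < X (vidx k) (vidx k) < 1 -> ~ is_vertex (Chat c) X.
Proof.
move=> hC /andP [hk0 hk1]; have hQ := Chat_Q hC.
case: c hC => hC.
- have [e [q [D [E [he hq hsD hD hcur]]]]] := curve_Q hQ hk0 hk1.
  by apply: (@notvertex_curve _ X D E q e) => // s hs; case: (hcur s hs) => h1 _.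
- have [e [q [D [E [he hq hsD hD hcur]]]]] := curve_Q hQ hk0 hk1.
  apply: (@notvertex_curve _ X D E q e) => // s hs; case: (hcur s hs) => h1 h2.
  by split => // i j; apply: h2; case: hC => _; apply.
- set Z := Jm *m X *m Jm^T.
  have hZ : inQ Z by apply: J_Q.
  have hZk : Z (vidx k) (vidx k) = 1 - X (vidx k) (vidx k).
    rewrite J_Q3 Q3_expr Q_00 // Q_0i // Q_i0 //; ring.
  have hk0' : 0 < Z (vidx k) (vidx k) by rewrite hZk; lra.
  have hk1' : Z (vidx k) (vidx k) < 1 by rewrite hZk; lra.
  have [e [q [D [E [he hq hsD hD hcur]]]]] := curve_Q hZ hk0' hk1'.
  apply: (@notvertex_curve _ X (Jm *m D *m Jm^T) (Jm *m E *m Jm^T) q e) => //.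
  + by rewrite /Defs.symmetric !trmx_mul trmxK hsD mulmxA.
  + apply/negP => /eqP h0; move/negP: hD; apply; apply/eqP.
    by rewrite -(Jinv D) h0 mulmx0 mul0mx.
  move=> s hs; case: (hcur s hs) => h1 h2.
  have <- : Jm *m ((1 + s ^+ 2 * q)^-1 *: (Z + s *: D + s ^+ 2 *: E)) *m Jm^T =
     (1 + s ^+ 2 * q)^-1 *: (X + s *: (Jm *m D *m Jm^T) + s ^+ 2 *: (Jm *m E *m Jm^T)).
    by rewrite Jlin /Z Jinv.
  split; first exact: J_Q.
  move=> i j hij; rewrite -J_Q3 Jinv; apply: h2.
  rewrite /Z J_Q3; case: hC => _; exact.
Qed.


Lemma Q_diag_ge0 (X : MX) i : inQ X -> 0 <= X (vidx i) (vidx i).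
Proof.
move=> hQ; rewrite -qf_ebas; case: hQ => -[_ hp] _; exact: hp.
Qed.

Lemma Q_diag_le1 (X : MX) i : inQ X -> X (vidx i) (vidx i) <= 1.
Proof.
move=> hQ.
have : 0 <= qf (ebas R 0 - ebas R (vidx i)) (ebas R 0 - ebas R (vidx i)) X.
  by case: hQ => -[_ hp] _; apply: hp.
rewrite qfBl !qfBr !qf_ebas Q_00 // Q_0i // Q_i0 //; lra.
Qed.

Lemma vertex_form c (X : MX) : is_vertex (Chat c) X ->
  exists S, X = vvT S.
Proof.
move=> hv; have hC := hv.1; have hQ := Chat_Q hC.
have hb : forall i, X (vidx i) (vidx i) = 0 \/ X (vidx i) (vidx i) = 1.
  move=> i; have h0 := Q_diag_ge0 i hQ; have h1 := Q_diag_le1 i hQ.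
  case: (boolP (0 < X (vidx i) (vidx i) < 1)) => h.
    by exfalso; apply: (frac_notvertex hC h).
  move: h; rewrite negb_and -!leNgt => /orP [h|h].
    by left; apply/le_anti/andP.
  by right; apply/le_anti/andP.
by exists [set i | X (vidx i) (vidx i) == 1]; apply: noFrac.
Qed.

End Mat.

Theorem corollary3p3 (R : realType) (n : nat) (c : which) :
  (forall X : 'M[R]_(n.+1), Chat c X ->
     (is_vertex (Chat c) X <-> \rank X = 1%N)) /\
  (forall X : 'M[R]_(n.+1),
     is_vertex (Chat c) X <->
     exists S : {set 'I_n},
       X = lifted_incidence R S *m (lifted_incidence R S)^T).
Proof.
split.
  move=> X hC; split.
    by move=> hv; have [S ->] := vertex_form hv; apply: vvT_rank.
  move=> hr; have hQ := Chat_Q hC.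
  rewrite (noFrac hQ (rank1_noFrac hQ hr)); exact: vertex_vvT.
move=> X; split; first exact: vertex_form.
by move=> [S ->]; apply: vertex_vvT.
Qed.
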